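(* Let $S$ be a semigroup and let $\mathcal{R}'$ and $\leq_l$ be binary relations on $S$. Write $\mathcal{L}'$ for the relation $\leq_l \cap \geq_l$, write $L'_a$ for the $\mathcal{L}'$-class of $a\in S$, and (when $\leq_l$ is a preorder) write $\wedge$ for the meet of $\mathcal{L}'$-classes with respect to the partial order on $S/\mathcal{L}'$ induced by $\leq_l$, where such meets exist. Then $S$ has a semigroup of straight left I-quotients $Q$ (i.e. $S$ embeds as a straight left I-order in an inverse semigroup $Q$) such that \[\mathcal{R}^Q\cap(S\times S)=\mathcal{R}' \quad\text{and}\quad \leq_{\mathcal{L}^Q}\cap\,(S\times S)=\ \leq_l\] if and only if all of the following hold: $\mathcal{R}'$ is a left compatible equivalence relation on $S$; $\leq_l$ is a preorder on $S$ such that the $\mathcal{L}'$-classes form a meet semilattice under the associated partial order; and $S$ satisfies: \begin{itemize} \item[(M1)] For all $\alpha,\beta\in S$ there exist $\gamma,\delta\in S$ such that $\gamma\,\mathcal{R}'\,\delta\,\mathcal{R}'\,\delta\beta=\gamma\alpha$ and $L'_\alpha\wedge L'_\beta=L'_{\gamma\alpha}$. \item[(M2)] For all $\alpha,\beta,\gamma,\delta\in S$, $L'_\alpha\wedge L'_\beta=L'_\gamma$ implies $L'_{\alpha\delta}\wedge L'_{\beta\delta}=L'_{\gamma\delta}$. \item[(M3)] For all $\alpha,\beta\in S$, $\alpha\beta\leq_l\beta$. \item[(M4)] $\mathcal{R}'\subseteq\mathcal{R}^*$. \item[(M5)] For all $\alpha,\beta,\gamma,\delta\in S$ with $\gamma\,\mathcal{R}'\,\gamma\alpha\,\mathcal{L}'\,\alpha$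 and $\delta\,\mathcal{R}'\,\delta\beta\,\mathcal{L}'\,\beta$, we have $\gamma\,\mathcal{L}'\,\delta$ if and only if $\alpha\,\mathcal{R}'\,\beta$. \item[(M6)] For all $\alpha,\beta,\gamma\in S$, $\alpha\,\mathcal{L}'\,\beta\,\mathcal{L}'\,\gamma\alpha=\gamma\beta$ implies $\alpha=\beta$. \end{itemize}
   Context: For an element $a$ of an inverse semigroup $Q$, $a^{-1}$ denotes its unique inverse. A subsemigroup $S$ of an inverse semigroup $Q$ is a left I-order in $Q$ (and $Q$ a semigroup of left I-quotients of $S$) if every $q\in Q$ can be written $q=a^{-1}b$ with $a,b\in S$; it is straight (and $Q$ a semigroup of straight left I-quotients) if moreover $a,b$ can always be chosen with $a\,\mathcal{R}\,b$ in $Q$. $\mathcal{R}^Q$, $\mathcal{L}^Q$ denote Green's relations of $Q$ and $\leq_{\mathcal{L}^Q}$ the preorder $a\leq_{\mathcal{L}^Q}b \iff Q^1a\subseteq Q^1b$. On $S$, $\mathcal{R}^*$ is the relation: $a\,\mathcal{R}^*\,b$ iff for all $x,y\in S^1$, $xa=ya \Leftrightarrow xb=yb$. A relation is left compatible if $a\,\rho\,b$ implies $ca\,\rho\,cb$ for all $c\in S$. *)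

(* Defs.v *)
Set Implicit Arguments.

Definition rel (T : Type) := T -> T -> Prop.

Definition assoc_op (T : Type) (mul : T -> T -> T) : Prop :=
  forall a b c, mul a (mul b c) = mul (mul a b) c.

Definition is_inverse_of (Q : Type) (mul : Q -> Q -> Q) (a b : Q) : Prop :=
  mul (mul a b) a = a /\ mul (mul b a) b = b.

Definition inverse_semigroup (Q : Type) (mul : Q -> Q -> Q) : Prop :=
  assoc_op mul /\ forall a, exists! b, is_inverse_of mul a b.

Definition greenR (Q : Type) (mul : Q -> Q -> Q) (a b : Q) : Prop :=
  (a = b \/ exists x, a = mul b x) /\ (b = a \/ exists y, b = mul a y).

Definition greenLle (Q : Type) (mul : Q -> Q -> Q) (a b : Q) : Prop :=
  a = b \/ exists x, a = mul x b.

Definition injective_hom (S Q : Type) (mulS : S -> S -> S) (mulQ : Q -> Q -> Q)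
  (f : S -> Q) : Prop :=
  (forall a b, f a = f b -> a = b) /\ (forall a b, f (mulS a b) = mulQ (f a) (f b)).

Definition straight_left_I_order (S Q : Type) (mulQ : Q -> Q -> Q) (f : S -> Q) : Prop :=
  forall q : Q, exists a b x, is_inverse_of mulQ (f a) x /\ q = mulQ x (f b)
                              /\ greenR mulQ (f a) (f b).

(* left multiplication by elements of S^1 *)
Definition mul1 (S : Type) (mul : S -> S -> S) (x : option S) (a : S) : S :=
  match x with None => a | Some s => mul s a end.

Definition Rstar (S : Type) (mul : S -> S -> S) (a b : S) : Prop :=
  forall x y : option S, mul1 mul x a = mul1 mul y a <-> mul1 mul x b = mul1 mul y b.

Definition equivalence (S : Type) (R : rel S) : Prop :=
  (forall a, R a a) /\ (forall a b, R a b -> R b a) /\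
  (forall a b c, R a b -> R b c -> R a c).

Definition left_compatible (S : Type) (mul : S -> S -> S) (R : rel S) : Prop :=
  forall a b c, R a b -> R (mul c a) (mul c b).

Definition preorder (S : Type) (le : rel S) : Prop :=
  (forall a, le a a) /\ (forall a b c, le a b -> le b c -> le a c).

Definition Lprime (S : Type) (le : rel S) (a b : S) : Prop := le a b /\ le b a.

(* L'_a /\ L'_b = L'_c  : the L'-class of c is the meet of the classes of a and b
   in the partial order S/L' induced by le (written out on representatives). *)
Definition meet_is (S : Type) (le : rel S) (a b c : S) : Prop :=
  le c a /\ le c b /\ forall d, le d a -> le d b -> le d c.

Definition classes_meet_semilattice (S : Type) (le : rel S) : Prop :=
  forall a b, exists c, meet_is le a b c.

(* Main.v *)
From Stdlib Require Import ClassicalEpsilon Classical FunctionalExtensionality PropExtensionality ProofIrrelevance Setoid.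
Require Import Defs.

Section InvS.
Variable Q : Type.
Variable m : Q -> Q -> Q.
Hypothesis Hinv : inverse_semigroup m.
Local Notation "x ** y" := (m x y) (at level 40, left associativity).

Lemma A : forall a b c, a ** (b ** c) = a ** b ** c.
Proof. apply (proj1 Hinv). Qed.

Definition inv (a : Q) : Q :=
  proj1_sig (constructive_indefinite_description _
    (match proj2 Hinv a with ex_intro _ b (conj H _) => ex_intro _ b H end)).

Lemma inv_spec a : is_inverse_of m a (inv a).
Proof. unfold inv. destruct constructive_indefinite_description as [b Hb]. simpl. exact Hb. Qed.

Lemma inv_uniq a b : is_inverse_of m a b -> b = inv a.
Proof.
  intro H. destruct (proj2 Hinv a) as [c [_ Hc]].
  rewrite <- (Hc _ H). apply Hc. apply inv_spec.
Qed.

Lemma inv1 a : a ** inv a ** a = a.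
Proof. apply (inv_spec a). Qed.
Lemma inv2 a : inv a ** a ** inv a = inv a.
Proof. apply (inv_spec a). Qed.

Lemma inv_sym a b : is_inverse_of m a b -> is_inverse_of m b a.
Proof. intros [H1 H2]; split; assumption. Qed.

Lemma inv_inv a : inv (inv a) = a.
Proof. symmetry. apply inv_uniq. apply inv_sym, inv_spec. Qed.

Ltac na := repeat rewrite A.
Ltac nah H := repeat rewrite A in H.
Ltac sg := match goal with |- ?g => idtac g end.

Lemma ctx_lem (u v : Q) : u = v -> forall X, X ** u = X ** v.
Proof. intros H X; rewrite H; reflexivity. Qed.

Ltac rw H := first [ rewrite H
  | let H0 := fresh "HH" in pose proof H as H0; repeat rewrite A in H0; rewrite H0; clear H0
  | let H' := fresh "HH" in pose proof (ctx_lem _ _ H) as H';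
    repeat setoid_rewrite A in H'; rewrite H'; clear H' ].
Ltac rwl H := first [ rewrite <- H
  | let H0 := fresh "HH" in pose proof H as H0; repeat rewrite A in H0; rewrite <- H0; clear H0
  | let H' := fresh "HH" in pose proof (ctx_lem _ _ H) as H';
    repeat setoid_rewrite A in H'; rewrite <- H'; clear H' ].

Lemma idem_comm e f : e ** e = e -> f ** f = f -> e ** f = f ** e.
Proof.
  intros He Hf.
  assert (Hx : is_inverse_of m (e ** f) (inv (e ** f))) by apply inv_spec.
  remember (inv (e ** f)) as x eqn:Ex.
  destruct Hx as [Hx1 Hx2]. nah Hx1. nah Hx2.
  assert (H1 : is_inverse_of m (e ** f) (f ** x ** e)).
  { split.
    - na. rw He. rw Hf. exact Hx1.
    - na. rw He. rw Hf. rw Hx2. reflexivity. }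
  apply inv_uniq in H1. rewrite <- Ex in H1.
  assert (Hxx : x ** x = x).
  { rewrite <- H1 at 1 2. na. rw Hx2. rewrite H1. reflexivity. }
  assert (Hef : e ** f ** (e ** f) = e ** f).
  { assert (I1 : is_inverse_of m x (e ** f)) by (split; na; assumption).
    assert (I2 : is_inverse_of m x x) by (split; rewrite !Hxx; reflexivity).
    apply inv_uniq in I1. apply inv_uniq in I2. rewrite I1, <- I2. exact Hxx. }
  assert (Hfe : f ** e ** (f ** e) = f ** e).
  { assert (Hy : is_inverse_of m (f ** e) (inv (f ** e))) by apply inv_spec.
    remember (inv (f ** e)) as y eqn:Ey.
    destruct Hy as [Hy1 Hy2]. nah Hy1. nah Hy2.
    assert (H2 : is_inverse_of m (f ** e) (e ** y ** f)).
    { split.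
      - na. rw Hf. rw He. exact Hy1.
      - na. rw Hf. rw He. rw Hy2. reflexivity. }
    apply inv_uniq in H2. rewrite <- Ey in H2.
    assert (Hyy : y ** y = y).
    { rewrite <- H2 at 1 2. na. rw Hy2. rewrite H2. reflexivity. }
    assert (I1 : is_inverse_of m y (f ** e)) by (split; na; assumption).
    assert (I2 : is_inverse_of m y y) by (split; rewrite !Hyy; reflexivity).
    apply inv_uniq in I1. apply inv_uniq in I2. rewrite I1, <- I2. exact Hyy. }
  assert (I1 : is_inverse_of m (e ** f) (f ** e)).
  { split; na.
    - rw Hf. rw He. nah Hef. exact Hef.
    - rw He. rw Hf. nah Hfe. exact Hfe. }
  assert (I2 : is_inverse_of m (e ** f) (e ** f)).
  { split; nah Hef; na; rewrite Hef; exact Hef. }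
  apply inv_uniq in I1. apply inv_uniq in I2. congruence.
Qed.

Local Notation iv := inv.

Lemma E1 a : iv a ** a ** (iv a ** a) = iv a ** a.
Proof. na. rw (inv1 a). reflexivity. Qed.
Lemma E2 a : a ** iv a ** (a ** iv a) = a ** iv a.
Proof. na. rw (inv1 a). reflexivity. Qed.

Lemma C11 a b : iv a ** a ** (iv b ** b) = iv b ** b ** (iv a ** a).
Proof. apply idem_comm; apply E1. Qed.
Lemma C22 a b : a ** iv a ** (b ** iv b) = b ** iv b ** (a ** iv a).
Proof. apply idem_comm; apply E2. Qed.
Lemma C12 a b : iv a ** a ** (b ** iv b) = b ** iv b ** (iv a ** a).
Proof. apply idem_comm; [apply E1|apply E2]. Qed.

Lemma inv_mul a b : iv (a ** b) = iv b ** iv a.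
Proof.
  symmetry. apply inv_uniq. split.
  - na. rwl (C12 a b). na. rw (inv1 a). rw (inv1 b). reflexivity.
  - na. rw (C12 a b). na. rw (inv2 b). rw (inv2 a). reflexivity.
Qed.

Lemma greenR_iff a b : greenR m a b <-> a ** iv a = b ** iv b.
Proof.
  split.
  - intros [H1 H2].
    assert (K1 : b ** iv b ** a = a).
    { destruct H1 as [->|[x ->]]. apply inv1. na. rw (inv1 b). reflexivity. }
    assert (K2 : a ** iv a ** b = b).
    { destruct H2 as [->|[x ->]]. apply inv1. na. rw (inv1 a). reflexivity. }
    assert (K3 : b ** iv b ** (a ** iv a) = a ** iv a) by (na; rw K1; reflexivity).
    assert (K4 : a ** iv a ** (b ** iv b) = b ** iv b) by (na; rw K2; reflexivity).
    rewrite <- K3, C22. exact K4.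
  - intro H. split; right.
    + exists (iv b ** a). rewrite A, <- H. symmetry; apply inv1.
    + exists (iv a ** b). rewrite A, H. symmetry; apply inv1.
Qed.

Lemma greenLle_iff a b : greenLle m a b <-> a ** (iv b ** b) = a.
Proof.
  split.
  - intros [->|[x ->]]. na. apply inv1. na. rw (inv1 b). reflexivity.
  - intro H. right. exists (a ** iv b). rewrite <- A. symmetry; exact H.
Qed.

Lemma Lp_iff a b : (greenLle m a b /\ greenLle m b a) <-> iv a ** a = iv b ** b.
Proof.
  rewrite !greenLle_iff. split.
  - intros [H1 H2].
    assert (K1 : iv a ** a ** (iv b ** b) = iv a ** a) by (rewrite <- A, H1; reflexivity).
    assert (K2 : iv b ** b ** (iv a ** a) = iv b ** b) by (rewrite <- A, H2; reflexivity).
    rewrite <- K1, C11. exact K2.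
  - intro H. split; [rewrite <- H | rewrite H]; rewrite A; apply inv1.
Qed.


Lemma MeetQ z a b : iv z ** z = iv a ** a ** (iv b ** b) ->
  greenLle m z a /\ greenLle m z b /\
  forall d, greenLle m d a -> greenLle m d b -> greenLle m d z.
Proof.
  intro H. rewrite !greenLle_iff.
  assert (Z : z ** (iv a ** a) ** (iv b ** b) = z).
  { rewrite <- A, <- H. rewrite A. apply inv1. }
  split; [|split].
  - rewrite <- Z at 1. na. rwl (C11 a b). na. rw (E1 a). nah Z. exact Z.
  - rewrite <- Z at 1. na. rw (E1 b). nah Z. exact Z.
  - intros d H1 H2. rewrite greenLle_iff in H1, H2 |- *. rewrite H. rewrite A, H1. exact H2.
Qed.

Lemma M1Q a b g d : iv g ** d = a ** iv b -> g ** iv g = d ** iv d ->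
  g ** a = d ** b /\ d ** iv d = d ** b ** iv (d ** b) /\
  iv (g ** a) ** (g ** a) = iv a ** a ** (iv b ** b).
Proof.
  intros Hq HR.
  assert (Hgg : iv g ** g = a ** iv b ** b ** iv a).
  { assert (K : iv g ** d ** iv (iv g ** d) = iv g ** g).
    { rewrite inv_mul, inv_inv. na. rwl HR. rw (inv2 g). reflexivity. }
    rewrite <- K, Hq, inv_mul, inv_inv. na. reflexivity. }
  assert (Hdd : iv d ** d = b ** iv a ** a ** iv b).
  { assert (K : iv (iv g ** d) ** (iv g ** d) = iv d ** d).
    { rewrite inv_mul, inv_inv. na. rw HR. rw (inv2 d). reflexivity. }
    rewrite <- K, Hq, inv_mul, inv_inv. na. reflexivity. }
  assert (Hga : g ** a = d ** b).
  { assert (K1 : g ** a = g ** a ** (iv b ** b)).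
    { rewrite <- (inv1 g) at 1. rewrite <- (A g (iv g) g), Hgg. na.
      rw (C11 b a). na. rw (inv1 a). reflexivity. }
    rewrite K1. na. rewrite <- (A g a (iv b)), <- Hq.
    na. rw HR. rw (inv1 d). reflexivity. }
  split; [exact Hga|split].
  - rewrite inv_mul. symmetry.
    assert (K : d ** b ** (iv b ** iv d) = d ** (iv d ** d) ** b ** iv b ** iv d)
      by (rewrite (A d (iv d) d), inv1; na; reflexivity).
    rewrite K, Hdd. na. rw (inv2 b). rwl Hdd. rw (inv1 d). reflexivity.
  - rewrite inv_mul. na. rewrite <- (A (iv a) (iv g) g), Hgg.
    na. rw (C11 b a). rw (E1 a). na. reflexivity.
Qed.

Lemma LinvQ g a : iv (g ** a) ** (g ** a) = iv a ** a -> iv g ** g ** a = a.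
Proof.
  intro H. rewrite inv_mul in H. nah H.
  assert (K : iv g ** g ** a = iv g ** g ** (a ** iv a ** a)) by (rewrite inv1; reflexivity).
  rewrite K. na. rw (C12 g a). rw H. apply inv1.
Qed.

Lemma M5Q g a : g ** iv g = g ** a ** iv (g ** a) -> iv (g ** a) ** (g ** a) = iv a ** a ->
  iv g ** g = a ** iv a.
Proof.
  intros H1 H2. apply LinvQ in H2.
  assert (K1 : iv g ** g ** (a ** iv a) = a ** iv a) by (na; rw H2; reflexivity).
  assert (K2 : iv g ** g = iv g ** g ** (a ** iv a) ** (iv g ** g)).
  { rewrite <- (inv2 g) at 1. rewrite <- (A (iv g) g (iv g)), H1, inv_mul. na. reflexivity. }
  rewrite K2. na. rw (C12 g a). rw (E1 g). rwl (C12 g a). nah K1. rewrite K1. reflexivity.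
Qed.

Lemma M4Q a b x y : a ** iv a = b ** iv b -> x ** a = y ** a -> x ** b = y ** b.
Proof.
  intros H1 H2. rewrite <- (inv1 b), <- H1. na. rewrite H2. reflexivity.
Qed.
Lemma M4Q' a b y : a ** iv a = b ** iv b -> a = y ** a -> b = y ** b.
Proof.
  intros H1 H2. rewrite <- (inv1 b), <- H1. na. rewrite <- H2. reflexivity.
Qed.

Lemma M2Q g a b d : iv g ** g = iv a ** a ** (iv b ** b) ->
  iv (g ** d) ** (g ** d) = iv (a ** d) ** (a ** d) ** (iv (b ** d) ** (b ** d)).
Proof.
  intro H. rewrite !inv_mul. na. rewrite <- (A (iv d) (iv g) g), H.
  na. rwl (C12 b d). rw (inv1 d). reflexivity.
Qed.
End InvS.

Section Gen.
Variable T : Type.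
Variable op : T -> T -> T.
Hypothesis Aop : forall a b c, op a (op b c) = op (op a b) c.
Hypothesis Hc : forall e f, op e e = e -> op f f = f -> op e f = op f e.
Local Notation "x ** y" := (op x y) (at level 40, left associativity).

Lemma uniq_gen a x y : is_inverse_of op a x -> is_inverse_of op a y -> x = y.
Proof.
  intros [X1 X2] [Y1 Y2].
  assert (I1 : x ** a ** (x ** a) = x ** a) by (rewrite Aop, X2; reflexivity).
  assert (I2 : y ** a ** (y ** a) = y ** a) by (rewrite Aop, Y2; reflexivity).
  assert (I3 : a ** x ** (a ** x) = a ** x) by (rewrite Aop, X1; reflexivity).
  assert (I4 : a ** y ** (a ** y) = a ** y) by (rewrite Aop, Y1; reflexivity).
  assert (Ex : x = y ** a ** x).
  { rewrite <- X2 at 1. rewrite <- Y1 at 1.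
    replace (x ** (a ** y ** a) ** x) with (x ** a ** (y ** a) ** x) by (rewrite !Aop; reflexivity).
    rewrite (Hc (x ** a) (y ** a) I1 I2).
    rewrite <- !Aop, (Aop x a x), X2. rewrite !Aop. reflexivity. }
  assert (Ey : y = y ** a ** x).
  { rewrite <- Y2 at 1. rewrite <- X1 at 1.
    replace (y ** (a ** x ** a) ** y) with (y ** ((a ** x) ** (a ** y))) by (rewrite !Aop; reflexivity).
    rewrite (Hc (a ** x) (a ** y) I3 I4).
    rewrite !Aop, Y2. reflexivity. }
  congruence.
Qed.
End Gen.

Section Fwd.
Variable S : Type.
Variable mul : S -> S -> S.
Variable R' le : S -> S -> Prop.
Variable Q : Type.
Variable mulQ : Q -> Q -> Q.
Variable f : S -> Q.
Hypothesis HQ : inverse_semigroup mulQ.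
Hypothesis Hf : injective_hom mul mulQ f.
Hypothesis Hst : straight_left_I_order mulQ f.
Hypothesis HR : forall a b, greenR mulQ (f a) (f b) <-> R' a b.
Hypothesis HL : forall a b, greenLle mulQ (f a) (f b) <-> le a b.
Local Notation "x ** y" := (mulQ x y) (at level 40, left associativity).
Local Notation iv := (inv Q mulQ HQ).

Lemma fh a b : f (mul a b) = f a ** f b.
Proof. apply (proj2 Hf). Qed.
Lemma fi a b : f a = f b -> a = b.
Proof. apply (proj1 Hf). Qed.
Lemma AQ a b c : a ** (b ** c) = a ** b ** c.
Proof. apply (proj1 HQ). Qed.

Lemma HR' a b : R' a b <-> f a ** iv (f a) = f b ** iv (f b).
Proof. rewrite <- HR. apply (greenR_iff Q mulQ HQ). Qed.
Lemma HL' a b : le a b <-> f a ** (iv (f b) ** f b) = f a.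
Proof. rewrite <- HL. apply (greenLle_iff Q mulQ HQ). Qed.
Lemma HLp a b : (le a b /\ le b a) <-> iv (f a) ** f a = iv (f b) ** f b.
Proof. rewrite <- !HL. apply (Lp_iff Q mulQ HQ). Qed.

Lemma meetQS a b c : iv (f c) ** f c = iv (f a) ** f a ** (iv (f b) ** f b) -> meet_is le a b c.
Proof.
  intro H. destruct (MeetQ Q mulQ HQ _ _ _ H) as [H1 [H2 H3]].
  split; [apply HL; exact H1|split; [apply HL; exact H2|]].
  intros d D1 D2. apply HL. apply H3; apply HL; assumption.
Qed.

Lemma M1S al be : exists ga de,
       R' ga de /\ R' de (mul de be) /\ mul de be = mul ga al /\
       meet_is le al be (mul ga al) /\
       iv (f (mul ga al)) ** f (mul ga al) = iv (f al) ** f al ** (iv (f be) ** f be).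
Proof.
  destruct (Hst (f al ** iv (f be))) as [a [b [x [Hx [Hq Hab]]]]].
  apply (inv_uniq Q mulQ HQ) in Hx. subst x.
  apply (greenR_iff Q mulQ HQ) in Hab.
  destruct (M1Q Q mulQ HQ (f al) (f be) (f a) (f b) (eq_sym Hq) Hab) as [E1 [E2 E3]].
  exists a, b.
  assert (Ee : mul b be = mul a al) by (apply fi; rewrite !fh; symmetry; exact E1).
  split; [apply HR'; exact Hab|split; [apply HR'; rewrite fh; exact E2|split; [exact Ee|]]].
  split; [apply meetQS|]; rewrite fh; exact E3.
Qed.

Lemma fwd : equivalence R' /\ left_compatible mul R' /\
   preorder le /\ classes_meet_semilattice le /\
   (forall al be, exists ga de,
       R' ga de /\ R' de (mul de be) /\ mul de be = mul ga al /\
       meet_is le al be (mul ga al)) /\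
   (forall al be ga de, meet_is le al be ga ->
       meet_is le (mul al de) (mul be de) (mul ga de)) /\
   (forall al be, le (mul al be) be) /\
   (forall a b, R' a b -> Rstar mul a b) /\
   (forall al be ga de,
       R' ga (mul ga al) -> Lprime le (mul ga al) al ->
       R' de (mul de be) -> Lprime le (mul de be) be ->
       (Lprime le ga de <-> R' al be)) /\
   (forall al be ga,
       Lprime le al be -> Lprime le be (mul ga al) -> mul ga al = mul ga be ->
       al = be).
Proof.
  split; [|split; [|split; [|split; [|split; [|split; [|split; [|split; [|split]]]]]]]].
  - split; [|split]; intros; rewrite !HR' in *; congruence.
  - intros a b c H. rewrite HR' in *. rewrite !fh, !(inv_mul Q mulQ HQ), !AQ.
    rewrite <- (AQ (f c) (f a)), <- (AQ (f c) (f b)), H. reflexivity.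
  - split.
    + intro a. apply HL'. rewrite AQ. apply (inv1 Q mulQ HQ).
    + intros a b c H1 H2. rewrite HL' in *. rewrite <- H1 at 1.
      rewrite <- !AQ, H2. exact H1.
  - intros a b. destruct (M1S a b) as [ga [de [_ [_ [_ [H _]]]]]]. eauto.
  - intros al be. destruct (M1S al be) as [ga [de [H1 [H2 [H3 [H4 _]]]]]]. eauto 10.
  - intros al be ga de Hm. destruct (M1S al be) as [g [d [_ [_ [_ [H4 H5]]]]]].
    assert (K : iv (f ga) ** f ga = iv (f (mul g al)) ** f (mul g al)).
    { apply HLp. destruct Hm as [m1 [m2 m3]]. destruct H4 as [n1 [n2 n3]]. split; auto. }
    apply meetQS. rewrite !fh. apply (M2Q Q mulQ HQ). rewrite K. exact H5.
  - intros al be. apply HL. right. exists (f al). apply fh.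
  - intros a b H. apply HR' in H. intros x y.
    destruct x as [s|], y as [t|]; simpl; split; intro E.
    + apply fi. rewrite !fh. apply (M4Q Q mulQ HQ (f a) (f b)); [exact H|]. rewrite <- !fh, E. reflexivity.
    + apply fi. rewrite !fh. apply (M4Q Q mulQ HQ (f b) (f a)); [symmetry; exact H|]. rewrite <- !fh, E. reflexivity.
    + apply fi. rewrite fh. symmetry. apply (M4Q' Q mulQ HQ (f a) (f b)); [exact H|]. rewrite <- fh, E. reflexivity.
    + apply fi. rewrite fh. symmetry. apply (M4Q' Q mulQ HQ (f b) (f a)); [symmetry; exact H|]. rewrite <- fh, E. reflexivity.
    + apply fi. rewrite fh. apply (M4Q' Q mulQ HQ (f a) (f b)); [exact H|]. rewrite <- fh, <- E. reflexivity.
    + apply fi. rewrite fh. apply (M4Q' Q mulQ HQ (f b) (f a)); [symmetry; exact H|]. rewrite <- fh, <- E. reflexivity.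
    + reflexivity.
    + reflexivity.
  - intros al be ga de H1 H2 H3 H4. unfold Lprime in *. rewrite !HLp in *. rewrite !HR' in *.
    rewrite !fh in *. apply (M5Q Q mulQ HQ) in H1; [|exact H2]. apply (M5Q Q mulQ HQ) in H3; [|exact H4].
    rewrite H1, H3. split; auto.
  - intros al be ga H1 H2 H3. unfold Lprime in *. rewrite !HLp in *. apply fi.
    assert (Ka : iv (f ga ** f al) ** (f ga ** f al) = iv (f al) ** f al) by (rewrite <- fh; congruence).
    assert (Kb : iv (f ga ** f be) ** (f ga ** f be) = iv (f be) ** f be) by (rewrite <- fh, <- H3; congruence).
    apply (LinvQ Q mulQ HQ) in Ka. apply (LinvQ Q mulQ HQ) in Kb.
    rewrite <- Ka, <- Kb, <- !AQ, <- !fh, H3. reflexivity.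
Qed.
End Fwd.

Section Bwd.
Variable S : Type.
Variable mul : S -> S -> S.
Hypothesis Hassoc : assoc_op mul.
Variable R' le : S -> S -> Prop.
Hypothesis HRe : equivalence R'.
Hypothesis Hlc : left_compatible mul R'.
Hypothesis Hpre : preorder le.
Hypothesis HM1 : forall al be, exists ga de,
       R' ga de /\ R' de (mul de be) /\ mul de be = mul ga al /\
       meet_is le al be (mul ga al).
Hypothesis HM2 : forall al be ga de, meet_is le al be ga ->
       meet_is le (mul al de) (mul be de) (mul ga de).
Hypothesis HM3 : forall al be, le (mul al be) be.
Hypothesis HM4 : forall a b, R' a b -> Rstar mul a b.
Hypothesis HM5 : forall al be ga de,
       R' ga (mul ga al) -> Lprime le (mul ga al) al ->
       R' de (mul de be) -> Lprime le (mul de be) be ->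
       (Lprime le ga de <-> R' al be).
Hypothesis HM6 : forall al be ga,
       Lprime le al be -> Lprime le be (mul ga al) -> mul ga al = mul ga be ->
       al = be.

Local Notation "x ** y" := (mul x y) (at level 40, left associativity).
Local Notation L' := (Lprime le).
Local Notation meet := (meet_is le).

Lemma As a b c : a ** (b ** c) = a ** b ** c.
Proof. apply Hassoc. Qed.

Lemma Rr a : R' a a. Proof. apply (proj1 HRe). Qed.
Lemma Rs a b : R' a b -> R' b a. Proof. apply (proj1 (proj2 HRe)). Qed.
Lemma Rt a b c : R' a b -> R' b c -> R' a c. Proof. apply (proj2 (proj2 HRe)). Qed.
Lemma lr a : le a a. Proof. apply (proj1 Hpre). Qed.
Lemma lt a b c : le a b -> le b c -> le a c. Proof. apply (proj2 Hpre). Qed.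
Lemma Lr a : L' a a. Proof. split; apply lr. Qed.
Lemma Ls a b : L' a b -> L' b a. Proof. intros [H1 H2]; split; assumption. Qed.
Lemma Lt a b c : L' a b -> L' b c -> L' a c.
Proof. intros [H1 H2] [H3 H4]; split; eapply lt; eauto. Qed.
Lemma LC a b c : R' a b -> R' (c ** a) (c ** b). Proof. apply Hlc. Qed.

Lemma Rst a b x y : R' a b -> x ** a = y ** a -> x ** b = y ** b.
Proof. intros H E. exact (proj1 (HM4 a b H (Some x) (Some y)) E). Qed.

Lemma rle a b c : le a b -> le (a ** c) (b ** c).
Proof.
  intro H. assert (M : meet a b a) by (split; [apply lr|split; [exact H|auto]]).
  apply (HM2 _ _ _ c) in M. apply M.
Qed.
Lemma rL a b c : L' a b -> L' (a ** c) (b ** c).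
Proof. intros [H1 H2]; split; apply rle; assumption. Qed.

Lemma meet_L a b c c' : meet a b c -> meet a b c' -> L' c c'.
Proof. intros [H1 [H2 H3]] [K1 [K2 K3]]. split; auto. Qed.
Lemma meet_Lsub a b c c' : meet a b c -> L' c c' -> meet a b c'.
Proof.
  intros [H1 [H2 H3]] [K1 K2]. split; [apply (lt _ _ _ K2 H1)|split; [apply (lt _ _ _ K2 H2)|]].
  intros d D1 D2. apply (lt _ c); auto.
Qed.
Lemma meet_args a b a' b' c : L' a a' -> L' b b' -> meet a b c -> meet a' b' c.
Proof.
  intros [A1 A2] [B1 B2] [H1 [H2 H3]]. split; [apply (lt _ _ _ H1 A1)|split; [apply (lt _ _ _ H2 B1)|]].
  intros d D1 D2. apply H3; [apply (lt _ _ _ D1 A2)|apply (lt _ _ _ D2 B2)].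
Qed.
Lemma meet_comm a b c : meet a b c -> meet b a c.
Proof. intros [H1 [H2 H3]]. split; [|split]; auto. Qed.
Lemma meet_of_le a b c : le a b -> meet a b c -> L' c a.
Proof. intros H [H1 [H2 H3]]. split; auto. apply H3; auto. apply lr. Qed.
Lemma meet_self a b c : L' a b -> meet a b c -> L' c a.
Proof. intros [H _]. apply meet_of_le; auto. Qed.
Lemma meet_refl a b : L' a b -> meet a b a.
Proof. intros [H1 H2]. split; [apply lr|split; auto]. Qed.

Lemma T1 q : exists k, R' k (k ** q) /\ L' (k ** q) q.
Proof.
  destruct (HM1 q q) as [g [d [H1 [H2 [H3 H4]]]]].
  exists d. split; auto. rewrite H3. eapply meet_self; [apply Lr|exact H4].
Qed.

Lemma TR1 p q x : R' p q -> L' (x ** p) p -> L' (x ** q) q.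
Proof.
  intros Hpq Hx.
  destruct (T1 q) as [k [K1 K2]].
  destruct (HM1 (x ** p) p) as [g [d [H1 [H2 [H3 H4]]]]].
  assert (Hd : L' (d ** p) p).
  { rewrite H3. eapply Lt; [eapply meet_self; [exact Hx|exact H4]|exact Hx]. }
  assert (Hkd : L' k d) by (apply (HM5 q p k d); auto; apply Rs; auto).
  assert (E : d ** q = g ** x ** q) by (apply (Rst p q); auto; rewrite H3; apply As).
  split; [apply HM3|].
  apply lt with (k ** q); [apply K2|].
  apply lt with (d ** q); [apply (rL _ _ q Hkd)|].
  rewrite E, <- As. apply HM3.
Qed.

Lemma TR a b s t : R' a b -> L' (s ** b) (t ** b) -> L' (s ** a) (t ** a).
Proof.
  intros Hab H.
  destruct (HM1 (s ** b) (t ** b)) as [g [d [H1 [H2 [H3 H4]]]]].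
  assert (G1 : L' (g ** (s ** b)) (s ** b)) by (eapply meet_self; eauto).
  assert (G2 : L' (d ** (t ** b)) (t ** b)) by (rewrite H3; eapply Lt; eauto).
  assert (Rb : forall z, R' (z ** b) (z ** a)) by (intro; apply LC, Rs, Hab).
  apply (TR1 _ _ _ (Rb s)) in G1. apply (TR1 _ _ _ (Rb t)) in G2.
  assert (E : g ** s ** a = d ** t ** a) by (apply (Rst b a); [apply Rs, Hab|rewrite <- !As; auto]).
  rewrite <- !As in E. eapply Lt; [apply Ls; exact G1|]. rewrite E. exact G2.
Qed.

Lemma TRle c d x y : R' c d -> le (x ** c) (y ** c) -> le (x ** d) (y ** d).
Proof.
  intros Hcd H.
  destruct (HM1 (x ** c) (y ** c)) as [g [v [H1 [H2 [H3 H4]]]]].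
  assert (G : L' (g ** (x ** c)) (x ** c)) by (eapply meet_of_le; eauto).
  rewrite <- H3, As in G. apply Ls in G. apply (TR d c) in G; [|apply Rs; auto].
  eapply lt; [apply G|]. rewrite <- As. apply HM3.
Qed.

Lemma TM c d x y z : R' c d -> meet (x ** c) (y ** c) (z ** c) -> meet (x ** d) (y ** d) (z ** d).
Proof.
  intros Hcd [H1 [H2 H3]].
  split; [apply (TRle c); auto|split; [apply (TRle c); auto|]].
  intros w W1 W2.
  assert (Wd : le w d) by (eapply lt; [exact W1|apply HM3]).
  destruct (HM1 w d) as [g [v [K1 [K2 [K3 K4]]]]].
  assert (G : L' (v ** d) w) by (rewrite K3; eapply meet_of_le; eauto).
  destruct G as [G1 G2].
  eapply lt; [exact G2|]. apply (TRle c); auto.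
  apply H3; apply (TRle d); auto; try (apply Rs; auto); eapply lt; eauto.
Qed.


Definition eqv a b c d := exists x y, x ** a = y ** c /\ x ** b = y ** d /\ L' (x ** a) a /\ L' a c.

Lemma eqv_refl a b : eqv a b a b.
Proof.
  destruct (T1 a) as [k [_ K]]. exists k, k. split; [|split; [|split]]; auto. apply Lr.
Qed.

Lemma eqv_sym a b c d : eqv a b c d -> eqv c d a b.
Proof.
  intros [x [y [E1 [E2 [L1 L2]]]]]. exists y, x. split; [|split; [|split]]; auto.
  rewrite <- E1. eapply Lt; [exact L1|exact L2]. apply Ls; auto.
Qed.

Lemma eqv_trans a b c d e f : R' c d -> eqv a b c d -> eqv c d e f -> eqv a b e f.
Proof.
  intros Hcd [x [y [E1 [E2 [L1 L2]]]]] [u [v [F1 [F2 [N1 N2]]]]].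
  assert (Yc : L' (y ** c) c) by (rewrite <- E1; eapply Lt; eauto).
  destruct (HM1 (y ** c) (u ** c)) as [g [d' [H1 [H2 [H3 H4]]]]].
  assert (G : L' (g ** (y ** c)) (y ** c)) by (eapply meet_self; [eapply Lt; [exact Yc|apply Ls; exact N1]|exact H4]).
  assert (Ed : g ** y ** d = d' ** u ** d) by (apply (Rst c d); auto; rewrite <- !As; auto).
  exists (g ** x), (d' ** v). split; [|split; [|split]].
  - rewrite <- !As, E1, <- F1, !As. rewrite <- (As d' u c), H3, As. reflexivity.
  - rewrite <- !As, E2, <- F2, !As. exact Ed.
  - rewrite <- As, E1. eapply Lt; [exact G|]. rewrite <- E1. exact L1.
  - eapply Lt; eauto.
Qed.

Lemma eqv_L2 a b c d : R' a b -> R' c d -> eqv a b c d -> L' b d.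
Proof.
  intros Hab Hcd [x [y [E1 [E2 [L1 L2]]]]].
  assert (Xb : L' (x ** b) b) by (apply (TR1 a b x); auto).
  assert (Yc : L' (y ** c) c) by (rewrite <- E1; eapply Lt; eauto).
  assert (Yd : L' (y ** d) d) by (apply (TR1 c d y); auto).
  eapply Lt; [apply Ls; exact Xb|]. rewrite E2. exact Yd.
Qed.

Lemma eqv_swap a b c d : R' a b -> R' c d -> eqv a b c d -> eqv b a d c.
Proof.
  intros Hab Hcd H. pose proof (eqv_L2 _ _ _ _ Hab Hcd H) as Lbd.
  destruct H as [x [y [E1 [E2 [L1 L2]]]]].
  exists x, y. split; [|split; [|split]]; auto. apply (TR1 a b x); auto.
Qed.

Lemma scale a b x : R' a b -> L' (x ** a) a -> eqv a b (x ** a) (x ** b).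
Proof.
  intros Hab Hx. destruct (T1 (x ** a)) as [k [_ K]].
  exists (k ** x), k. split; [|split; [|split]].
  - rewrite As; reflexivity.
  - rewrite As; reflexivity.
  - rewrite <- As. eapply Lt; eauto.
  - apply Ls; auto.
Qed.

Lemma eqv_mm m m' : L' m m' -> eqv m m m' m'.
Proof.
  intro H. destruct (HM1 m m') as [g [d [H1 [H2 [H3 H4]]]]].
  exists g, d. split; [|split; [|split]]; auto. eapply meet_self; eauto.
Qed.

Definition cls a b : S -> S -> Prop := fun c d => R' c d /\ eqv a b c d.

Lemma cls_iff a b c d : R' a b -> R' c d -> (cls a b = cls c d <-> eqv a b c d).
Proof.
  intros Hab Hcd. split.
  - intro H. assert (K : cls c d c d) by (split; [auto|apply eqv_refl]).
    rewrite <- H in K. apply K.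
  - intro H. apply functional_extensionality; intro e. apply functional_extensionality; intro f.
    apply propositional_extensionality. unfold cls. split; intros [K1 K2]; split; auto.
    + apply eqv_trans with a b; auto. apply eqv_sym; auto.
    + apply eqv_trans with c d; auto.
Qed.

Definition Qt := {P : S -> S -> Prop | exists a b, R' a b /\ P = cls a b}.

Lemma Qeq (p q : Qt) : proj1_sig p = proj1_sig q -> p = q.
Proof.
  destruct p as [p Hp], q as [q Hq]. simpl. intro E. subst q. f_equal. apply proof_irrelevance.
Qed.

Definition repr (p : Qt) a b := R' a b /\ proj1_sig p = cls a b.

Lemma repr_ex p : exists a b, repr p a b.
Proof. destruct p as [P [a [b [H1 H2]]]]. exists a, b. split; auto. Qed.

Lemma repr_eq p q a b c d : repr p a b -> repr q c d -> (p = q <-> eqv a b c d).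
Proof.
  intros [H1 H2] [K1 K2]. rewrite <- cls_iff; auto. rewrite <- H2, <- K2. split.
  - intros ->. reflexivity.
  - apply Qeq.
Qed.

Lemma repr_same p q a b : repr p a b -> repr q a b -> p = q.
Proof. intros H K. apply (repr_eq p q a b a b H K). apply eqv_refl. Qed.

Definition mk a b (H : R' a b) : Qt := exist _ (cls a b) (ex_intro _ a (ex_intro _ b (conj H eq_refl))).

Lemma repr_mk a b H : repr (mk a b H) a b.
Proof. split; auto. Qed.

Lemma repr_eqv p a b c d : repr p a b -> R' c d -> eqv a b c d -> repr p c d.
Proof.
  intros [H1 H2] Hcd E. split; auto. rewrite H2. apply cls_iff; auto.
Qed.


Definition cond' b c g e := e ** c = g ** b /\ meet b c (g ** b).

Lemma cond_ex b c : exists g e, cond' b c g e.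
Proof. destruct (HM1 b c) as [g [e [_ [_ [H3 H4]]]]]. exists g, e. split; auto. Qed.

Lemma cond_R a b c d g e : R' a b -> R' c d -> cond' b c g e -> R' (g ** a) (e ** d).
Proof.
  intros Hab Hcd [E _]. apply Rt with (g ** b); [apply LC; auto|].
  rewrite <- E. apply LC; auto.
Qed.

Lemma W3 a b c d g e g' e' : R' a b -> R' c d -> cond' b c g e -> cond' b c g' e' ->
  eqv (g ** a) (e ** d) (g' ** a) (e' ** d).
Proof.
  intros Hab Hcd [E1 M1] [E2 M2].
  assert (Lgg : L' (g ** b) (g' ** b)) by (eapply meet_L; eauto).
  destruct (HM1 (g ** b) (g' ** b)) as [u [v [H1 [H2 [H3 H4]]]]].
  assert (G : L' (u ** (g ** b)) (g ** b)) by (eapply meet_self; eauto).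
  exists u, v. split; [|split; [|split]].
  - rewrite !As. apply (Rst b a); [apply Rs; auto|]. rewrite <- !As. auto.
  - rewrite !As. apply (Rst c d); auto. rewrite <- !As, E1, E2. auto.
  - rewrite As. apply (TR a b); auto. rewrite <- As. exact G.
  - apply (TR a b); auto.
Qed.

Lemma W1 a b c x g e : R' a b -> L' (x ** a) a -> cond' (x ** b) c g e -> cond' b c (g ** x) e.
Proof.
  intros Hab Hx [E M]. split.
  - rewrite E, As. reflexivity.
  - rewrite <- As. eapply meet_args; [|apply Lr|exact M]. apply (TR1 a b x); auto.
Qed.

Lemma W2 b c d x g e : R' c d -> L' (x ** c) c -> cond' b (x ** c) g e -> cond' b c g (e ** x).
Proof.
  intros Hcd Hx [E M]. split.
  - rewrite <- As. exact E.
  - eapply meet_args; [apply Lr| |exact M]. exact Hx.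
Qed.

Lemma Wmain a b c d a' b' c' d' g e g' e' :
  R' a b -> R' c d -> R' a' b' -> R' c' d' -> eqv a b a' b' -> eqv c d c' d' ->
  cond' b c g e -> cond' b' c' g' e' -> eqv (g ** a) (e ** d) (g' ** a') (e' ** d').
Proof.
  intros Hab Hcd Hab' Hcd' [x [y [E1 [E2 [L1 L2]]]]] [u [v [F1 [F2 [N1 N2]]]]] C C'.
  assert (Ly : L' (y ** a') a') by (rewrite <- E1; eapply Lt; eauto).
  assert (Lv : L' (v ** c') c') by (rewrite <- F1; eapply Lt; eauto).
  destruct (cond_ex (x ** b) (u ** c)) as [g1 [e1 C1]].
  assert (Ca : cond' b c (g1 ** x) (e1 ** u)).
  { apply (W2 b c d u); auto. apply (W1 a b (u ** c) x); auto. }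
  assert (Cb : cond' b' c' (g1 ** y) (e1 ** v)).
  { apply (W2 b' c' d' v); auto. apply (W1 a' b' (v ** c') y); auto. rewrite <- E2, <- F1. exact C1. }
  apply eqv_trans with (g1 ** x ** a) (e1 ** u ** d).
  { apply (cond_R a b c d); auto. }
  { apply W3 with b c; auto. }
  replace (g1 ** x ** a) with (g1 ** y ** a') by (rewrite <- !As, E1; reflexivity).
  replace (e1 ** u ** d) with (e1 ** v ** d') by (rewrite <- !As, F2; reflexivity).
  apply W3 with b' c'; auto.
Qed.

Lemma repr_ex' p : exists ab : S * S, repr p (fst ab) (snd ab).
Proof. destruct (repr_ex p) as [a [b H]]. exists (a, b). exact H. Qed.
Definition rep (p : Qt) : S * S := proj1_sig (constructive_indefinite_description _ (repr_ex' p)).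
Lemma rep_spec p : repr p (fst (rep p)) (snd (rep p)).
Proof. unfold rep. destruct constructive_indefinite_description as [x H]. exact H. Qed.

Lemma cond_ex' b c : exists ge : S * S, cond' b c (fst ge) (snd ge).
Proof. destruct (cond_ex b c) as [g [e H]]. exists (g, e). exact H. Qed.
Definition wit b c : S * S := proj1_sig (constructive_indefinite_description _ (cond_ex' b c)).
Lemma wit_spec b c : cond' b c (fst (wit b c)) (snd (wit b c)).
Proof. unfold wit. destruct constructive_indefinite_description as [x H]. exact H. Qed.

Definition mulQ (p q : Qt) : Qt :=
  mk (fst (wit (snd (rep p)) (fst (rep q))) ** fst (rep p))
     (snd (wit (snd (rep p)) (fst (rep q))) ** snd (rep q))
     (cond_R _ _ _ _ _ _ (proj1 (rep_spec p)) (proj1 (rep_spec q)) (wit_spec _ _)).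

Lemma prod_repr p q a b c d g e : repr p a b -> repr q c d -> cond' b c g e ->
  repr (mulQ p q) (g ** a) (e ** d).
Proof.
  intros Hp Hq C.
  apply repr_eqv with (fst (wit (snd (rep p)) (fst (rep q))) ** fst (rep p))
     (snd (wit (snd (rep p)) (fst (rep q))) ** snd (rep q)).
  - apply repr_mk.
  - apply (cond_R a b c d); auto. apply Hp. apply Hq.
  - pose proof (rep_spec p) as Rp. pose proof (rep_spec q) as Rq.
    apply Wmain with (snd (rep p)) (fst (rep q)) b c; auto.
    + apply Rp.
    + apply Rq.
    + apply Hp.
    + apply Hq.
    + apply (repr_eq p p _ _ _ _ Rp Hp). reflexivity.
    + apply (repr_eq q q _ _ _ _ Rq Hq). reflexivity.
    + apply wit_spec.
Qed.


Lemma assocQ p q r : mulQ p (mulQ q r) = mulQ (mulQ p q) r.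
Proof.
  destruct (repr_ex p) as [a [b Hp]]. destruct (repr_ex q) as [c [d Hq]].
  destruct (repr_ex r) as [e [f Hr]].
  pose proof (proj1 Hp) as Hab. pose proof (proj1 Hq) as Hcd. pose proof (proj1 Hr) as Hef.
  destruct (cond_ex b c) as [g1 [e1 C1]].
  pose proof (prod_repr _ _ _ _ _ _ _ _ Hp Hq C1) as Hpq.
  destruct (cond_ex (e1 ** d) e) as [g2 [e2 C2]].
  pose proof (prod_repr _ _ _ _ _ _ _ _ Hpq Hr C2) as Hpqr.
  destruct (cond_ex d e) as [g3 [e3 C3]].
  pose proof (prod_repr _ _ _ _ _ _ _ _ Hq Hr C3) as Hqr.
  destruct (cond_ex b (g3 ** c)) as [g4 [e4 C4]].
  pose proof (prod_repr _ _ _ _ _ _ _ _ Hp Hqr C4) as Hpqr'.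
  apply (repr_eq _ _ _ _ _ _ Hpqr' Hpqr). apply eqv_sym.
  destruct C1 as [C1 M1], C2 as [C2 M2], C3 as [C3 M3], C4 as [C4 M4].
  assert (S1 : meet (e1 ** c) (g3 ** c) (e4 ** g3 ** c)).
  { destruct M1 as [M1a [M1b M1c]]. destruct M4 as [M4a [M4b M4c]]. split; [|split].
    - rewrite <- As, C4, C1. apply M1c.
      + exact M4a.
      + eapply lt; [exact M4b|apply HM3].
    - rewrite <- As. apply HM3.
    - intros w W1 W2. rewrite <- As, C4. apply M4c; auto.
      eapply lt; [exact W1|]. rewrite C1. exact M1a. }
  apply (TM c d) in S1; auto.
  assert (S3 : meet (e1 ** d) e (e4 ** g3 ** d)).
  { destruct S1 as [N1 [N2 N3]]. destruct M3 as [M3a [M3b M3c]]. split; [|split]; auto.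
    - eapply lt; [exact N2|exact M3b].
    - intros w W1 W2. apply N3; auto. apply M3c; auto. eapply lt; [exact W1|apply HM3]. }
  assert (K : L' (e2 ** e) (e4 ** (e3 ** e))).
  { rewrite C2, C3, (As e4 g3 d). exact (meet_L _ _ _ _ M2 S3). }
  destruct (HM1 (e2 ** e) (e4 ** (e3 ** e))) as [X [Y [_ [_ [H3 H4]]]]].
  assert (G : L' (X ** (e2 ** e)) (e2 ** e)) by (eapply meet_self; eauto).
  assert (Ra : R' (e2 ** e) (g2 ** (g1 ** a))).
  { apply Rs. apply Rt with (g2 ** (g1 ** b)); [apply LC, LC; auto|].
    rewrite <- C1, C2. apply LC. apply LC; auto. }
  assert (Rb : R' (e4 ** (e3 ** e)) (g4 ** a)).
  { apply Rs. apply Rt with (g4 ** b); [apply LC; auto|].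
    rewrite <- C4, C3. apply LC. apply LC; auto. }
  assert (Ei : X ** (g2 ** (g1 ** a)) = Y ** (g4 ** a)).
  { rewrite !As. apply (Rst b a); [apply Rs; auto|].
    rewrite <- !As, <- C4, <- C1, !As. apply (Rst d c); [apply Rs; auto|].
    rewrite <- !As, <- C2, <- C3. symmetry; exact H3. }
  assert (Lx : L' (X ** (g2 ** (g1 ** a))) (g2 ** (g1 ** a))) by (apply (TR1 _ _ _ Ra G)).
  exists X, Y. split; [exact Ei|split; [|split]].
  - rewrite !As. apply (Rst e f); auto. rewrite <- !As. symmetry; exact H3.
  - exact Lx.
  - eapply Lt; [apply Ls; exact Lx|]. rewrite Ei. apply (TR1 _ _ _ Rb).
    rewrite H3. eapply Lt; [exact G|exact K].
Qed.


Definition ivQ (p : Qt) : Qt := mk (snd (rep p)) (fst (rep p)) (Rs _ _ (proj1 (rep_spec p))).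

Lemma repr_iv p a b : repr p a b -> repr (ivQ p) b a.
Proof.
  intro H. pose proof (rep_spec p) as Rp.
  apply repr_eqv with (snd (rep p)) (fst (rep p)).
  - apply repr_mk.
  - apply Rs, H.
  - apply eqv_swap; [apply Rp|apply H|]. apply (repr_eq p p _ _ _ _ Rp H). reflexivity.
Qed.

Lemma meet_LL a b c : L' a b -> L' c a -> meet a b c.
Proof. intros H1 H2. eapply meet_Lsub; [apply meet_refl; exact H1|apply Ls; exact H2]. Qed.

Lemma pip p p' a b : repr p a b -> repr p' b a -> mulQ (mulQ p p') p = p.
Proof.
  intros Hp Hp'. pose proof (proj1 Hp) as Hab.
  destruct (T1 b) as [k [_ Kb]].
  assert (C1 : cond' b b k k) by (split; [reflexivity|apply meet_LL; [apply Lr|exact Kb]]).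
  pose proof (prod_repr _ _ _ _ _ _ _ _ Hp Hp' C1) as H1.
  assert (Ka : L' (k ** a) a) by (apply (TR1 b a k); [apply Rs; auto|exact Kb]).
  destruct (T1 (k ** a)) as [j [_ Jk]].
  assert (C2 : cond' (k ** a) a j (j ** k)).
  { split; [apply eq_sym, As|]. apply meet_LL; [exact Ka|exact Jk]. }
  pose proof (prod_repr _ _ _ _ _ _ _ _ H1 Hp C2) as H2.
  apply (repr_eq _ _ _ _ _ _ H2 Hp). apply eqv_sym. rewrite As. apply scale; auto.
  rewrite <- As. eapply Lt; eauto.
Qed.

Lemma inv_ok p : is_inverse_of mulQ p (ivQ p).
Proof.
  destruct (repr_ex p) as [a [b Hp]]. pose proof (repr_iv _ _ _ Hp) as Hi.
  split; [apply (pip _ _ a b)|apply (pip _ _ b a)]; auto.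
Qed.


Lemma idem_repr p : mulQ p p = p -> exists a, repr p a a.
Proof.
  intro Hpp. destruct (repr_ex p) as [a [b Hp]]. pose proof (proj1 Hp) as Hab.
  destruct (cond_ex b a) as [g [e C]].
  pose proof (prod_repr _ _ _ _ _ _ _ _ Hp Hp C) as H1.
  assert (Rge : R' (g ** a) (e ** b)) by (apply (cond_R a b a b); auto).
  assert (E : eqv (g ** a) (e ** b) a b) by (apply (repr_eq _ _ _ _ _ _ H1 Hp); exact Hpp).
  pose proof (eqv_L2 _ _ _ _ Rge Hab E) as Lb.
  destruct C as [Ce Cm].
  assert (La : L' (e ** a) a) by (apply (TR1 b a e); [apply Rs; auto|exact Lb]).
  destruct E as [X [Y [E1 [E2 [L1 L2]]]]].
  assert (Lg : L' (g ** b) b) by (apply (TR1 a b g); auto).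
  assert (Lab : L' a b) by (eapply Lt; [apply Ls; exact La|]; rewrite Ce; exact Lg).
  assert (Yb : Y ** b = X ** (e ** a)).
  { rewrite Ce, As. apply (Rst a b); auto. rewrite <- As. symmetry; exact E1. }
  assert (XG : L' (X ** g ** a) a) by (rewrite <- As; eapply Lt; eauto).
  apply (TR1 a b) in XG; auto.
  exists a. replace b with a in Hp; auto.
  apply (HM6 a b (X ** e)); auto.
  - rewrite <- As, Ce, As. apply Ls. exact XG.
  - rewrite <- !As, <- Yb. symmetry. exact E2.
Qed.

Lemma idem_commQ p q a c : repr p a a -> repr q c c -> mulQ p q = mulQ q p.
Proof.
  intros Hp Hq.
  destruct (cond_ex a c) as [g [e C]]. pose proof (prod_repr _ _ _ _ _ _ _ _ Hp Hq C) as H1.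
  destruct (cond_ex c a) as [g' [e' C']]. pose proof (prod_repr _ _ _ _ _ _ _ _ Hq Hp C') as H2.
  apply (repr_eq _ _ _ _ _ _ H1 H2).
  destruct C as [Ce Cm], C' as [Ce' Cm']. rewrite Ce, Ce'. apply eqv_mm.
  eapply meet_L; [exact Cm|apply meet_comm; exact Cm'].
Qed.

Lemma HQt : inverse_semigroup mulQ.
Proof.
  split.
  - intros p q r. apply assocQ.
  - intro p. exists (ivQ p). split; [apply inv_ok|].
    intros q Hq. apply (uniq_gen Qt mulQ) with p.
    + intros a b c. apply assocQ.
    + intros e f He Hf. destruct (idem_repr e He) as [x Hx]. destruct (idem_repr f Hf) as [y Hy].
      eapply idem_commQ; eauto.
    + apply inv_ok.
    + exact Hq.
Qed.


Definition kof a : S := proj1_sig (constructive_indefinite_description _ (T1 a)).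
Lemma kof_spec a : R' (kof a) (kof a ** a) /\ L' (kof a ** a) a.
Proof. unfold kof. destruct constructive_indefinite_description as [k H]. exact H. Qed.

Definition fS a : Qt := mk (kof a) (kof a ** a) (proj1 (kof_spec a)).

Lemma frepr a k : R' k (k ** a) -> L' (k ** a) a -> repr (fS a) k (k ** a).
Proof.
  intros H1 H2. destruct (kof_spec a) as [K1 K2].
  apply repr_eqv with (kof a) (kof a ** a); [apply repr_mk|exact H1|].
  assert (Lk : L' (kof a) k) by (apply (HM5 a a); auto; apply Rr).
  destruct (HM1 (kof a) k) as [u [v [_ [_ [E M]]]]].
  exists u, v. split; [|split; [|split]]; auto.
  - rewrite !As, E. reflexivity.
  - eapply meet_self; eauto.
Qed.

Lemma finj a b : fS a = fS b -> a = b.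
Proof.
  intro H. destruct (kof_spec a) as [K1 K2]. destruct (kof_spec b) as [K1' K2'].
  pose proof (proj1 (repr_eq (fS a) (fS b) _ _ _ _ (repr_mk _ _ (proj1 (kof_spec a))) (repr_mk _ _ (proj1 (kof_spec b)))) H) as H0.
  destruct H0 as [x [y [E1 [E2 [L1 L2]]]]].
  apply (HM6 a b (x ** kof a)).
  - eapply Lt; [apply Ls; exact K2|]. eapply Lt; [apply Ls; apply (rL _ _ a L1)|].
    rewrite <- !As, E2, As. eapply Lt; [|exact K2']. apply rL.
    rewrite <- E1. eapply Lt; eauto.
  - eapply Lt; [apply Ls; exact K2'|]. rewrite <- As, E2, As, <- E1. apply rL.
    eapply Lt; [apply Ls; exact L2|]. apply Ls; exact L1.
  - rewrite <- !As, E2, As, <- E1, <- As. reflexivity.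
Qed.

Lemma fhom a b : fS (a ** b) = mulQ (fS a) (fS b).
Proof.
  destruct (kof_spec a) as [K1 K2]. destruct (kof_spec b) as [K1' K2'].
  set (k := kof a) in *. set (k' := kof b) in *.
  pose proof (frepr a k K1 K2) as Ra. pose proof (frepr b k' K1' K2') as Rb.
  destruct (cond_ex (k ** a) k') as [u [v C]].
  pose proof (prod_repr _ _ _ _ _ _ _ _ Ra Rb C) as Hp.
  destruct C as [Ce Cm].
  assert (E : v ** (k' ** b) = u ** k ** (a ** b)) by (rewrite As, Ce, <- !As; reflexivity).
  rewrite E in Hp.
  apply (repr_same _ _ (u ** k) (u ** k ** (a ** b))); [|exact Hp].
  apply frepr.
  - rewrite <- E. apply Rt with (u ** (k ** a)); [apply LC; auto|].
    rewrite <- Ce. apply LC. auto.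
  - apply (HM2 _ _ _ b) in Cm.
    assert (M : meet (a ** b) b (u ** (k ** a) ** b)).
    { eapply meet_args; [apply (rL _ _ b K2)|exact K2'|exact Cm]. }
    replace (u ** k ** (a ** b)) with (u ** (k ** a) ** b) by (rewrite !As; reflexivity).
    eapply meet_of_le; [apply HM3|exact M].
Qed.


Lemma ivQ_inv p : ivQ p = inv Qt mulQ HQt p.
Proof. apply inv_uniq. apply inv_ok. Qed.

Lemma eR a k : R' k (k ** a) -> L' (k ** a) a ->
  exists j, L' (j ** k) k /\ repr (mulQ (fS a) (ivQ (fS a))) (j ** k) (j ** k).
Proof.
  intros H1 H2. pose proof (frepr a k H1 H2) as Ra. pose proof (repr_iv _ _ _ Ra) as Ri.
  destruct (T1 (k ** a)) as [j [_ J]].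
  assert (C : cond' (k ** a) (k ** a) j j) by (split; [reflexivity|apply meet_LL; [apply Lr|exact J]]).
  exists j. split.
  - apply (TR1 (k ** a) k j); auto. apply Rs; auto.
  - exact (prod_repr _ _ _ _ _ _ _ _ Ra Ri C).
Qed.

Lemma fR a b : greenR mulQ (fS a) (fS b) <-> R' a b.
Proof.
  rewrite (greenR_iff Qt mulQ HQt), <- !ivQ_inv.
  destruct (kof_spec a) as [K1 K2]. destruct (kof_spec b) as [K1' K2'].
  destruct (eR a _ K1 K2) as [j [J Ja]]. destruct (eR b _ K1' K2') as [j' [J' Jb]].
  rewrite (repr_eq _ _ _ _ _ _ Ja Jb). split.
  - intros [x [y [_ [_ [_ L]]]]]. apply (HM5 a b (kof a) (kof b)); auto.
    eapply Lt; [apply Ls; exact J|]. eapply Lt; eauto.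
  - intro H. apply eqv_mm. eapply Lt; [exact J|]. eapply Lt; [|apply Ls; exact J'].
    apply (HM5 a b (kof a) (kof b)); auto.
Qed.

Lemma fL a b : greenLle mulQ (fS a) (fS b) <-> le a b.
Proof.
  rewrite (greenLle_iff Qt mulQ HQt), <- !ivQ_inv.
  destruct (kof_spec a) as [K1 K2]. destruct (kof_spec b) as [K1' K2'].
  set (k := kof a) in *. set (k' := kof b) in *.
  pose proof (frepr a k K1 K2) as Ra. pose proof (frepr b k' K1' K2') as Rb.
  pose proof (repr_iv _ _ _ Rb) as Ri.
  destruct (T1 k') as [j [_ J]].
  assert (C : cond' k' k' j j) by (split; [reflexivity|apply meet_LL; [apply Lr|exact J]]).
  pose proof (prod_repr _ _ _ _ _ _ _ _ Ri Rb C) as Hm.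
  set (m := j ** (k' ** b)) in *.
  assert (Lm : L' m b) by (unfold m; rewrite As; eapply Lt; [apply rL; exact J|exact K2']).
  destruct (cond_ex (k ** a) m) as [g [d C2]].
  pose proof (prod_repr _ _ _ _ _ _ _ _ Ra Hm C2) as Hp.
  destruct C2 as [Ce Cm]. rewrite Ce, As in Hp.
  split.
  - intro H. rewrite H in Hp.
    pose proof (proj1 (repr_eq _ _ _ _ _ _ Hp Ra) eq_refl) as E.
    assert (Rg : R' (g ** k) (g ** k ** a)) by (rewrite <- As; apply LC; auto).
    apply (eqv_L2 _ _ _ _ Rg K1) in E. rewrite <- As in E.
    destruct Cm as [_ [Cm2 _]].
    eapply lt; [apply K2|]. eapply lt; [apply E|]. eapply lt; [exact Cm2|apply Lm].
  - intro H.
    assert (Lg : L' (g ** (k ** a)) (k ** a)).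
    { eapply meet_of_le; [|exact Cm]. eapply lt; [apply K2|]. eapply lt; [exact H|apply Lm]. }
    apply (repr_same _ _ (g ** k) (g ** k ** a)); [exact Hp|].
    apply frepr.
    + rewrite <- As; apply LC; auto.
    + rewrite <- As. eapply Lt; eauto.
Qed.

Lemma fstraight : straight_left_I_order mulQ fS.
Proof.
  intro q. destruct (repr_ex q) as [a [b Hq]]. pose proof (proj1 Hq) as Hab.
  exists a, b, (ivQ (fS a)). split; [apply inv_ok|split; [|apply fR; auto]].
  destruct (kof_spec a) as [K1 K2]. destruct (kof_spec b) as [K1' K2'].
  set (k := kof a) in *. set (k' := kof b) in *.
  pose proof (frepr a k K1 K2) as Ra. pose proof (frepr b k' K1' K2') as Rb.
  pose proof (repr_iv _ _ _ Ra) as Ri.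
  destruct (cond_ex k k') as [g [d C]].
  pose proof (prod_repr _ _ _ _ _ _ _ _ Ri Rb C) as Hp.
  destruct C as [Ce Cm].
  assert (Lk : L' k k') by (apply (HM5 a b k k'); auto).
  assert (Lg : L' (g ** k) k) by (eapply meet_self; eauto).
  rewrite !As, Ce in Hp.
  apply (repr_eq _ _ _ _ _ _ Hq Hp). apply scale; auto.
  eapply Lt; [apply rL; exact Lg|exact K2].
Qed.


Lemma bwd : exists (Q : Type) (mulQ : Q -> Q -> Q) (f : S -> Q),
      inverse_semigroup mulQ /\ injective_hom mul mulQ f /\
      straight_left_I_order mulQ f /\
      (forall a b, greenR mulQ (f a) (f b) <-> R' a b) /\
      (forall a b, greenLle mulQ (f a) (f b) <-> le a b).
Proof.
  exists Qt, mulQ, fS. split; [apply HQt|split; [split; [apply finj|intros; apply fhom]|]].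
  split; [apply fstraight|split; [apply fR|apply fL]].
Qed.

End Bwd.

Theorem theorem3p7 (S : Type) (mul : S -> S -> S) (Hassoc : assoc_op mul)
  (R' : S -> S -> Prop) (le : S -> S -> Prop) :
  (exists (Q : Type) (mulQ : Q -> Q -> Q) (f : S -> Q),
      inverse_semigroup mulQ /\ injective_hom mul mulQ f /\
      straight_left_I_order mulQ f /\
      (forall a b, greenR mulQ (f a) (f b) <-> R' a b) /\
      (forall a b, greenLle mulQ (f a) (f b) <-> le a b))
  <->
  (equivalence R' /\ left_compatible mul R' /\
   preorder le /\ classes_meet_semilattice le /\
   (* (M1) *)
   (forall al be, exists ga de,
       R' ga de /\ R' de (mul de be) /\ mul de be = mul ga al /\
       meet_is le al be (mul ga al)) /\
   (* (M2) *)
   (forall al be ga de, meet_is le al be ga ->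
       meet_is le (mul al de) (mul be de) (mul ga de)) /\
   (* (M3) *)
   (forall al be, le (mul al be) be) /\
   (* (M4) *)
   (forall a b, R' a b -> Rstar mul a b) /\
   (* (M5) *)
   (forall al be ga de,
       R' ga (mul ga al) -> Lprime le (mul ga al) al ->
       R' de (mul de be) -> Lprime le (mul de be) be ->
       (Lprime le ga de <-> R' al be)) /\
   (* (M6) *)
   (forall al be ga,
       Lprime le al be -> Lprime le be (mul ga al) -> mul ga al = mul ga be ->
       al = be)).
Proof.
  split.
  - intros [Q [mulQ [f [HQ [Hf [Hst [HR HL]]]]]]].
    exact (fwd S mul R' le Q mulQ f HQ Hf Hst HR HL).
  - intros [HRe [Hlc [Hpre [_ [HM1 [HM2 [HM3 [HM4 [HM5 HM6]]]]]]]]].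
    eapply bwd; eauto.
Qed.
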